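(* Let $X$ be an infinite-dimensional complex Banach space and let $\phi:\mathcal{B}(X)\to\mathcal{B}(X)$ be a surjective map such that $K(\phi(T)\phi(S)+\phi(S)\phi(T))=K(TS+ST)$ for all $T,S\in\mathcal{B}(X)$. Then for every $F\in\mathcal{B}(X)$, $\phi(F)$ has rank one if and only if $F$ has rank one.
   Context: $\mathcal{B}(X)$ denotes the algebra of all bounded linear operators on $X$. For $T\in\mathcal{B}(X)$, the analytic core $K(T)$ is the set of all $x\in X$ for which there exist $\delta>0$ and a sequence $(x_n)_{n\ge 0}\subset X$ with $x_0=x$, $Tx_{n+1}=x_n$ and $\|x_n\|\le \delta^n\|x\|$ for all $n\ge 0$. *)

(* Defs.v *)
From mathcomp Require Import all_boot all_algebra all_classical all_reals all_analysis.
From mathcomp Require Import complex.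
Import GRing.Theory Num.Theory.
Set Implicit Arguments. Unset Strict Implicit. Unset Printing Implicit Defensive.
Local Open Scope ring_scope.
Local Open Scope classical_set_scope.

(* Operators are
   represented as functions X -> X together with the predicate [bounded_op]. *)

Section Ops.
Variables (R : realType) (X : normedModType R[i]).

Definition bounded_op (T : X -> X) : Prop :=
  (forall (a : R[i]) (x y : X), T (a *: x + y) = a *: T x + T y) /\
  (exists M : R[i], forall x : X, `|T x| <= M * `|x|).

Definition infinite_dimensional : Prop :=
  forall s : seq X, exists x : X,
    forall c : 'I_(size s) -> R[i], x != \sum_(i < size s) c i *: s`_i.

Definition analytic_core (T : X -> X) : set X :=
  [set x | exists (delta : R[i]) (xs : nat -> X),
     0 < delta /\ xs 0%N = x /\
     (forall n, T (xs n.+1) = xs n) /\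
     (forall n, `|xs n| <= delta ^+ n * `|x|)].

Definition rank_one (T : X -> X) : Prop :=
  (exists x, T x != 0) /\ exists y : X, forall x, exists c : R[i], T x = c *: y.

Definition jprod (T S : X -> X) : X -> X := fun x => T (S x) + S (T x).

End Ops.

(* Main.v *)
Require Import Defs.
From mathcomp Require Import all_boot all_algebra all_classical all_reals all_analysis.
From mathcomp Require Import complex.
From mathcomp Require Import lra ring.
Import GRing.Theory Num.Theory.
Import order.Order.TTheory.
Set Implicit Arguments. Unset Strict Implicit. Unset Printing Implicit Defensive.
Local Open Scope classical_set_scope.
Local Open Scope ring_scope.

Section Basics.
Variables (R : realType) (X : normedModType R[i]).
Local Notation C := R[i].

Definition linf (V : lmodType C) (f : X -> V) :=
  forall (a : C) (x y : X), f (a *: x + y) = a *: f x + f y.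

Lemma scaleCE (a b : C) : a *: b = a * b. Proof. by []. Qed.

Definition blin (f : X -> C) :=
  linf f /\ exists M : C, forall x, `|f x| <= M * `|x|.

Section LinProps.
Variables (V : lmodType C) (f : X -> V).
Hypothesis hf : linf f.
Lemma linf0 : f 0 = 0.
Proof. by have := hf 1 0 0; rewrite scaler0 add0r scale1r => /eqP; rewrite addrC -subr_eq subrr eq_sym => /eqP. Qed.
Lemma linfD x y : f (x + y) = f x + f y.
Proof. by have := hf 1 x y; rewrite !scale1r. Qed.
Lemma linfZ a x : f (a *: x) = a *: f x.
Proof. by have := hf a x 0; rewrite addr0 linf0 addr0. Qed.
Lemma linfN x : f (- x) = - f x.
Proof. by rewrite -(scaleN1r x) linfZ scaleN1r. Qed.
Lemma linfB x y : f (x - y) = f x - f y.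
Proof. by rewrite linfD linfN. Qed.
Lemma linf_sum n (c : nat -> C) (e : nat -> X) :
  f (\sum_(i < n) c i *: e i) = \sum_(i < n) c i *: f (e i).
Proof.
elim: n => [|n IH]; first by rewrite !big_ord0 linf0.
by rewrite !big_ord_recr /= linfD IH linfZ.
Qed.
End LinProps.

Lemma bounded_linf (T : X -> X) : bounded_op T -> linf T.
Proof. by case. Qed.

Lemma blin_linf f : blin f -> linf f.
Proof. by case. Qed.

Lemma blin_add f g : blin f -> blin g -> blin (fun x => f x + g x).
Proof.
move=> [lf [M1 hM1]] [lg [M2 hM2]]; split.
  move=> a x y; rewrite lf lg /= !scaleCE mulrDr; rewrite !addrA; congr (_ + _).
  by rewrite -!addrA; congr (_ + _); rewrite addrC.
exists (M1 + M2) => x; rewrite mulrDl; apply: le_trans (ler_normD _ _) _.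
exact: lerD.
Qed.

Lemma blin_scale (k : C) f : blin f -> blin (fun x => k * f x).
Proof.
move=> [lf [M hM]]; split.
  by move=> a x y; rewrite lf /= !scaleCE mulrDr !mulrA [k * a]mulrC.
exists (`|k| * M) => x; rewrite normrM -mulrA; apply: ler_wpM2l; [exact: normr_ge0|exact: hM].
Qed.

Lemma blin_opp f : blin f -> blin (fun x => - f x).
Proof.
move=> hf; have -> : (fun x => - f x) = (fun x => -1 * f x).
  by apply: funext => x; rewrite mulN1r.
exact: blin_scale.
Qed.

Lemma blin_sub f g : blin f -> blin g -> blin (fun x => f x - g x).
Proof. by move=> hf hg; apply: blin_add => //; apply: blin_opp. Qed.

Lemma blin0 : blin (fun _ => 0).
Proof.
split; first by move=> a x y; rewrite /= scaleCE mulr0 addr0.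
by exists 0 => x; rewrite normr0 mul0r.
Qed.

Lemma blin_sum n (F : nat -> X -> C) :
  (forall i, blin (F i)) -> blin (fun x => \sum_(i < n) F i x).
Proof.
move=> hF; elim: n => [|n IH].
  have -> : (fun x => \sum_(i < 0) F i x) = (fun _ => 0).
    by apply: funext => x; rewrite big_ord0.
  exact: blin0.
have -> : (fun x => \sum_(i < n.+1) F i x) = (fun x => \sum_(i < n) F i x + F n x).
  by apply: funext => x; rewrite big_ord_recr.
exact: blin_add.
Qed.

Lemma bounded_add (T S : X -> X) :
  bounded_op T -> bounded_op S -> bounded_op (fun x => T x + S x).
Proof.
move=> [lT [M1 hM1]] [lS [M2 hM2]]; split.
  move=> a x y; rewrite lT lS scalerDr !addrA; congr (_ + _).
  by rewrite -!addrA; congr (_ + _); rewrite addrC.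
exists (M1 + M2) => x; rewrite mulrDl; apply: le_trans (ler_normD _ _) _.
exact: lerD.
Qed.

Lemma bounded_r1 (f : X -> C) (v : X) : blin f -> bounded_op (fun x => f x *: v).
Proof.
move=> [lf [M hM]]; split.
  by move=> a x y; rewrite lf /= scaleCE scalerDl scalerA.
exists (M * `|v|) => x; rewrite normrZ mulrAC; apply: ler_wpM2r; [exact: normr_ge0|exact: hM].
Qed.

Lemma bounded_scale (k : C) (T : X -> X) : bounded_op T -> bounded_op (fun x => k *: T x).
Proof.
move=> [lT [M hM]]; split.
  by move=> a x y; rewrite lT scalerDr !scalerA mulrC.
exists (`|k| * M) => x; rewrite normrZ -mulrA; apply: ler_wpM2l; [exact: normr_ge0|exact: hM].
Qed.

Lemma bounded_id : bounded_op (fun x : X => x).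
Proof. by split => //; exists 1 => x; rewrite mul1r. Qed.

Lemma bounded_zero : bounded_op (fun x : X => 0).
Proof.
split; first by move=> a x y; rewrite scaler0 addr0.
by exists 0 => x; rewrite normr0 mul0r.
Qed.

End Basics.

Section HB.
Local Open Scope complex_scope.
Variables (R : realType) (X : normedModType R[i]).
Local Notation C := R[i].

Definition rs (t : R) (x : X) : X := t%:C *: x.
Definition pn (x : X) : R := complex.Re `|x|.

Lemma normrC_real (t : R) : `|t%:C| = `|t|%:C :> C.
Proof. by rewrite normc_def /= expr0n /= addr0 sqrtr_sqr. Qed.

Lemma pnE x : `|x| = (pn x)%:C.
Proof. by rewrite /pn RRe_real // ger0_real. Qed.

Lemma pn_ge0 x : 0 <= pn x.
Proof. by rewrite -ler0c -pnE. Qed.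

Lemma pnD x y : pn (x + y) <= pn x + pn y.
Proof. by rewrite -lecR rmorphD /= -!pnE ler_normD. Qed.

Lemma pnZ t x : pn (rs t x) = `|t| * pn x.
Proof. by apply: complexI; rewrite rmorphM /= -!pnE -normrC_real normrZ. Qed.

Lemma pnN x : pn (- x) = pn x.
Proof. by rewrite /pn normrN. Qed.

Lemma normr_i : `|'i : C| = 1.
Proof. by rewrite normc_def /= expr0n expr1n add0r sqrtr1. Qed.

Lemma pn_i x : pn ('i *: x) = pn x.
Proof. by rewrite /pn normrZ normr_i mul1r. Qed.

Lemma rs1 x : rs 1 x = x.
Proof. by rewrite /rs rmorph1 scale1r. Qed.

Lemma rs0 x : rs 0 x = 0.
Proof. by rewrite /rs rmorph0 scale0r. Qed.

Lemma rsA s t x : rs s (rs t x) = rs (s * t) x.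
Proof. by rewrite /rs scalerA rmorphM. Qed.

Lemma rsDl s t x : rs (s + t) x = rs s x + rs t x.
Proof. by rewrite /rs rmorphD scalerDl. Qed.

Lemma rsDr s x y : rs s (x + y) = rs s x + rs s y.
Proof. by rewrite /rs scalerDr. Qed.

Lemma rsN s x : rs (- s) x = - rs s x.
Proof. by rewrite /rs rmorphN scaleNr. Qed.

Variable y : X.
Hypothesis y0 : y != 0.

Definition gok (G : set (X * R)) :=
  [/\ (forall x a b, G (x, a) -> G (x, b) -> a = b),
      G (0, 0),
      (forall x a x' a' t, G (x, a) -> G (x', a') -> G (rs t x + x', t * a + a')),
      (forall x a, G (x, a) -> a <= pn x) &
      G (y, pn y)].

Definition G0 : set (X * R) := fun q => exists t, q = (rs t y, t * pn y).

Lemma gok0 : gok G0.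
Proof.
split.
- move=> x a b [t [-> ->]] [t' [e ->]]; move: e.
  move/eqP; rewrite -subr_eq0 /rs -scalerBl scaler_eq0 (negbTE y0) orbF.
  rewrite -rmorphB /= => /eqP e; have : t - t' = 0 by apply: complexI; rewrite e rmorph0.
  by move/eqP; rewrite subr_eq0 => /eqP ->.
- by exists 0; rewrite rs0 mul0r.
- move=> x a x' a' t [s [-> ->]] [s' [-> ->]]; exists (t * s + s').
  by rewrite rsA rsDl mulrDl mulrA.
- move=> x a [t [-> ->]]; rewrite pnZ; apply: ler_wpM2r; [exact: pn_ge0|exact: ler_norm].
- by exists 1; rewrite rs1 mul1r.
Qed.

Section GokProps.
Variable G : set (X * R).
Hypothesis hG : gok G.

Lemma gokZ u a s : G (u, a) -> G (rs s u, s * a).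
Proof.
case: hG => _ h0 hc _ _ hu; have := hc _ _ _ _ s hu h0.
by rewrite !addr0.
Qed.

Lemma gokD u a u' a' : G (u, a) -> G (u', a') -> G (u + u', a + a').
Proof.
case: hG => _ _ hc _ _ hu hu'; have := hc _ _ _ _ 1 hu hu'.
by rewrite rs1 mul1r.
Qed.

Lemma gok_fun x a b : G (x, a) -> G (x, b) -> a = b.
Proof. by case: hG => hf _ _ _ _; exact: hf. Qed.

Lemma gok_dom x a : G (x, a) -> a <= pn x.
Proof. by case: hG => _ _ _ hd _; exact: hd. Qed.

End GokProps.

Lemma ext_step (G : set (X * R)) x0 :
  gok G -> ~ (exists a, G (x0, a)) ->
  exists G', [/\ gok G', G `<=` G' & exists c, G' (x0, c)].
Proof.
move=> hG nx0.
pose S : set R := fun r => exists u a, G (u, a) /\ r = a - pn (u - x0).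
have key : forall u a v b, G (u, a) -> G (v, b) -> a - pn (u - x0) <= pn (v + x0) - b.
  move=> u a v b hu hv; have huv := gokD hG hu hv.
  have := gok_dom hG huv; have := pnD (u - x0) (v + x0).
  have -> : u - x0 + (v + x0) = u + v by rewrite addrACA addNr addr0.
  lra.
have S0 : S !=set0 by exists (0 - pn (0 - x0)); exists 0, 0; split => //; case: hG.
have Sub : ubound S (pn (0 + x0) - 0).
  move=> r [u [a [hu ->]]]; apply: key hu _; by case: hG.
have hsup : has_ubound S by exists (pn (0 + x0) - 0).
pose c := sup S.
have Hup : forall u a, G (u, a) -> a - pn (u - x0) <= c.
  by move=> u a hu; apply: ub_le_sup => //; exists u, a.
have Hlo : forall v b, G (v, b) -> c <= pn (v + x0) - b.
  move=> v b hv; apply: ge_sup => // r [u [a [hu ->]]]; exact: key hu hv.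
pose G' : set (X * R) := fun q => exists t u a, G (u, a) /\ q = (rs t x0 + u, t * c + a).
exists G'; split; last first.
- exists c; exists 1, 0, 0; split; first by case: hG.
  by rewrite rs1 addr0 mul1r addr0.
- move=> [u a] hu; exists 0, u, a; split => //.
  by rewrite rs0 add0r mul0r add0r.
split.
- move=> x a b [t [u [a1 [hu [-> ->]]]]] [t' [u' [a1' [hu' [e ->]]]]].
  have [tt'|ntt'] := eqVneq t t'.
    subst t'; have uu : u = u' by apply: (addrI (rs t x0)).
    by subst u'; rewrite (gok_fun hG hu hu').
  exfalso; apply: nx0.
  have e2 : rs t x0 = rs t' x0 + (u' - u) by rewrite addrA -e addrK.
  have e' : rs (t - t') x0 = u' - u.
    by rewrite rsDl rsN e2 addrC addKr.
  have hs : t - t' != 0 by rewrite subr_eq0.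
  have := gokZ hG ((t - t')^-1) (gokD hG hu' (gokZ hG (-1) hu)).
  rewrite rsN rs1 -e' rsA mulVf // rs1 => h.
  by exists ((t - t')^-1 * (a1' + -1 * a1)).
- exists 0, 0, 0; split; first by case: hG.
  by rewrite rs0 addr0 mul0r addr0.
- move=> x a x' a' s [t [u [a1 [hu [-> ->]]]]] [t' [u' [a1' [hu' [-> ->]]]]].
  exists (s * t + t'), (rs s u + u'), (s * a1 + a1'); split.
    by case: hG => _ _ hc _ _; exact: hc.
  congr (_, _); first by rewrite rsDr rsA rsDl addrACA.
  by rewrite mulrDr mulrDl mulrA addrACA.
- move=> x a [t [u [a1 [hu [-> ->]]]]].
  case: (ltgtP t 0) => [tneg|tpos|->].
  + have sp : 0 < - t by rewrite oppr_gt0.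
    have h := Hup _ _ (gokZ hG ((- t)^-1) hu).
    have hp : pn (rs t x0 + u) = - t * pn (rs (- t)^-1 u - x0).
      rewrite -[X in X * pn _](gtr0_norm sp) -pnZ rsDr rsA mulfV ?gt_eqF // rs1.
      by rewrite /rs scalerN rmorphN scaleNr opprK addrC.
    rewrite hp.
    have h' : (- t) * ((- t)^-1 * a1 - pn (rs (- t)^-1 u - x0)) <= (- t) * c.
      by rewrite ler_pM2l.
    rewrite mulrBr mulrA mulfV ?gt_eqF // mul1r in h'.
    lra.
  + have h := Hlo _ _ (gokZ hG (t^-1) hu).
    have hp : pn (rs t x0 + u) = t * pn (rs t^-1 u + x0).
      rewrite -[X in X * pn _](gtr0_norm tpos) -pnZ rsDr rsA mulfV ?gt_eqF // rs1.
      by rewrite addrC.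
    rewrite hp.
    have h' : t * c <= t * (pn (rs t^-1 u + x0) - t^-1 * a1) by rewrite ler_pM2l.
    rewrite mulrBr mulrA mulfV ?gt_eqF // mul1r in h'.
    lra.
  + rewrite rs0 add0r mul0r add0r. exact: (gok_dom hG hu).
- exists 0, y, (pn y); split; first by case: hG.
  by rewrite rs0 add0r mul0r add0r.
Qed.

Lemma exists_maxgraph : exists M, gok M /\ forall x, exists a, M (x, a).
Proof.
pose T := {G : set (X * R) | gok G}.
pose Rl (s1 s2 : T) : bool := `[< (proj1_sig s1 `<=` proj1_sig s2) >].
pose t0 : T := exist _ G0 gok0.
have [M Mmax] : exists M : T, premaximal (fun a b => Rl a b) M.
  apply: (ZL_preorder t0).
  - by move=> t; apply/asboolP.
  - by move=> r s t /asboolP rs /asboolP st; apply/asboolP; exact: subset_trans rs st.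
  - move=> A Atot.
    have [[s As]|A0] := pselect (exists s, A s); last first.
      by exists t0 => s As; exfalso; apply: A0; exists s.
    have two : forall s1 s2 q1 q2, A s1 -> A s2 -> proj1_sig s1 q1 -> proj1_sig s2 q2 ->
        exists s, A s /\ proj1_sig s q1 /\ proj1_sig s q2.
      move=> s1 s2 q1 q2 A1 A2 h1 h2.
      case: (Atot _ _ A1 A2) => /asboolP sub.
        by exists s2; split => //; split => //; exact: sub.
      by exists s1; split => //; split => //; exact: sub.
    pose U : set (X * R) := fun q => exists s, A s /\ proj1_sig s q.
    have hU : gok U.
      split.
      - move=> x a b [s1 [A1 h1]] [s2 [A2 h2]].
        have [s' [_ [h1' h2']]] := two _ _ _ _ A1 A2 h1 h2.
        exact: (gok_fun (proj2_sig s') h1' h2').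
      - by exists s; split => //; case: (proj2_sig s).
      - move=> x a x' a' t [s1 [A1 h1]] [s2 [A2 h2]].
        have [s' [As' [h1' h2']]] := two _ _ _ _ A1 A2 h1 h2.
        exists s'; split => //; case: (proj2_sig s') => _ _ hc _ _; exact: hc.
      - move=> x a [s1 [A1 h1]]; exact: (gok_dom (proj2_sig s1) h1).
      - by exists s; split => //; case: (proj2_sig s).
    exists (exist _ U hU) => s' As'; apply/asboolP => q hq; by exists s'.
exists (proj1_sig M); split; first exact: (proj2_sig M).
move=> x; apply: contrapT => nx.
have [G' [hG' sub [c hc]]] := ext_step (proj2_sig M) nx.
have /asboolP := Mmax (exist _ G' hG') (asboolT sub) => /= sub'.
by apply: nx; exists c; exact: sub'.
Qed.

Lemma hb_real : exists rho : X -> R,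
  [/\ (forall t x x', rho (rs t x + x') = t * rho x + rho x'),
      (forall x, rho x <= pn x) & rho y = pn y].
Proof.
have [M [hM hdom]] := exists_maxgraph.
pose rho x := proj1_sig (cid (hdom x)).
have hr x : M (x, rho x) := proj2_sig (cid (hdom x)).
exists rho; split.
- move=> t x x'; apply: (gok_fun hM (hr _)); case: hM => _ _ hc _ _; exact: hc.
- move=> x; exact: (gok_dom hM (hr x)).
- apply: (gok_fun hM (hr y)); by case: hM.
Qed.

Lemma scale_decomp (a : C) (x : X) :
  a *: x = rs (complex.Re a) x + rs (complex.Im a) ('i *: x).
Proof.
rewrite /rs scalerA -scalerDl; congr (_ *: x).
by rewrite {1}[a]complexE [(complex.Im a)%:C * _]mulrC.
Qed.

Lemma ii : 'i * 'i = -1 :> C.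
Proof. by rewrite -expr2 sqr_i. Qed.

Lemma ring_aux (A1 A2 R1 R2 R3 R4 I : C) : I * I = -1 ->
  (A1 * R1 + (A2 * R2 + R3)) - I * ((- A2) * R1 + (A1 * R2 + R4)) =
  (A1 + I * A2) * (R1 - I * R2) + (R3 - I * R4).
Proof.
move=> h; apply/eqP; rewrite -subr_eq0; apply/eqP.
transitivity ((1 + I * I) * (A2 * R2)); first by ring.
by rewrite h addrN mul0r.
Qed.

Lemma hb_complex : exists g : X -> C, blin g /\ g y = 1.
Proof.
have [rho [rlin rdom ry]] := hb_real.
have rho0 : rho 0 = 0.
  by have := rlin 1 0 0; rewrite rs1 addr0 mul1r => /eqP; rewrite addrC -subr_eq subrr eq_sym => /eqP.
have rhoN x : rho (- x) = - rho x.
  by have := rlin (-1) x 0; rewrite rsN rs1 addr0 rho0 addr0 mulN1r.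
have rabs x : `|rho x| <= pn x.
  rewrite ler_norml rdom andbT -[- _ <= _]lerN2 opprK -rhoN.
  by rewrite -(pnN x); apply: rdom.
pose g x := (rho x)%:C - 'i * (rho ('i *: x))%:C.
have glin : linf g.
  move=> a x x'; rewrite /g scaleCE scalerDr scalerA [('i * a)]mulrC.
  rewrite [(a * 'i) *: x]scale_decomp [a *: x]scale_decomp ReiNIm ImiRe -!addrA !rlin.
  have ha : a = (complex.Re a)%:C + 'i * (complex.Im a)%:C := complexE a.
  move: (complex.Re a) (complex.Im a) ha => ar ai ->.
  rewrite !rmorphD !rmorphM !rmorphN.
  exact: ring_aux ii.
have gbd : exists M : C, forall x, `|g x| <= M * `|x|.
  exists 2 => x; rewrite /g; apply: le_trans (ler_normB _ _) _.
  rewrite normrM normr_i mul1r !normrC_real pnE mulr2n mulrDl mul1r.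
  by apply: lerD; rewrite lecR // -(pn_i x).
have gy0 : g y != 0.
  apply/eqP => /(congr1 (@complex.Re R)); rewrite /g raddfB /=.
  rewrite mul0r mulr0 subr0 subr0 ry => h; move: y0.
  by rewrite -normr_eq0 pnE h rmorph0 eqxx.
exists (fun x => (g y)^-1 * g x); split; first exact: blin_scale.
by rewrite mulVf.
Qed.

End HB.

Section LinAlg.
Variables (R : realType) (X : normedModType R[i]).
Local Notation C := R[i].

Lemma hb_exists (y : X) : y != 0 -> exists g, blin g /\ g y = 1.
Proof. exact: hb_complex. Qed.

Definition indep n (e : nat -> X) :=
  forall c : nat -> C, \sum_(i < n) c i *: e i = 0 -> forall i, (i < n)%N -> c i = 0.

Lemma sum_delta n k (hk : (k < n)%N) (F : nat -> C) :
  \sum_(j < n) F j * (nat_of_ord j == k)%:R = F k.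
Proof.
rewrite (bigD1 (Ordinal hk)) //= eqxx mulr1 big1 ?addr0 // => j hj.
suff -> : (nat_of_ord j == k) = false by rewrite mulr0.
by apply/negbTE; apply: contra hj => /eqP hjk; apply/eqP; apply: val_inj.
Qed.

Lemma biorth n (e : nat -> X) : indep n e ->
  exists f : nat -> X -> C, (forall i, blin (f i)) /\
    forall i j, (i < n)%N -> (j < n)%N -> f i (e j) = (i == j)%:R.
Proof.
elim: n => [|n IH] hind.
  by exists (fun _ _ => 0); split => // i; exact: blin0.
have hind' : indep n e.
  move=> c hc i hi.
  pose c' := fun i => if (i < n)%N then c i else 0.
  have := hind c'; rewrite big_ord_recr /= /c' ltnn scale0r addr0.
  have -> : \sum_(i < n) (if (i < n)%N then c i else 0) *: e i = \sum_(i < n) c i *: e i.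
    by apply: eq_bigr => j _; rewrite ltn_ord.
  move=> /(_ hc i (ltnW hi)); by rewrite hi.
have [h [hbl hdel]] := IH hind'.
pose w := e n - \sum_(j < n) h j (e n) *: e j.
have w0 : w != 0.
  apply/eqP => hw.
  pose c := fun i => if (i < n)%N then - h i (e n) else 1.
  have := hind c; rewrite big_ord_recr /= /c ltnn scale1r.
  have -> : \sum_(i < n) (if (i < n)%N then - h i (e n) else 1) *: e i =
            - \sum_(j < n) h j (e n) *: e j.
    rewrite -sumrN; apply: eq_bigr => j _; by rewrite ltn_ord scaleNr.
  rewrite addrC -/w hw => /(_ erefl n (ltnSn n)); rewrite ltnn => /eqP.
  by rewrite oner_eq0.
have [g [gbl gw]] := hb_exists w0.
pose fn := fun x => g x - \sum_(j < n) g (e j) * h j x.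
have fnbl : blin fn.
  apply: (blin_sub gbl).
  exact: (@blin_sum _ _ n (fun j x => g (e j) * h j x) (fun j => blin_scale _ (hbl j))).
have fnk k : (k < n)%N -> fn (e k) = 0.
  move=> hk; rewrite /fn.
  have -> : \sum_(j < n) g (e j) * h j (e k) = \sum_(j < n) g (e j) * (nat_of_ord j == k)%:R.
    by apply: eq_bigr => j _; rewrite hdel.
  by rewrite (sum_delta hk (fun j => g (e j))) subrr.
have fnn : fn (e n) = 1.
  rewrite /fn -gw /w linfB; last exact: blin_linf.
  rewrite (linf_sum (blin_linf gbl) n (fun j => h j (e n)) e).
  congr (_ - _); apply: eq_bigr => j _; by rewrite mulrC.
exists (fun i => if i == n then fn else fun x => h i x - h i (e n) * fn x); split.
  move=> i; case: ifP => _ //; apply: blin_sub => //; exact: blin_scale.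
move=> i j; rewrite !ltnS => hi hj.
have [->|hi'] := eqVneq i n; have [->|hj'] := eqVneq j n.
- by rewrite fnn.
- have hj2 : (j < n)%N by rewrite ltn_neqAle hj' hj.
  by rewrite ?eqxx fnk // eq_sym (negbTE hj').
- by rewrite fnn mulr1 subrr (negbTE hi').
- have hj2 : (j < n)%N by rewrite ltn_neqAle hj' hj.
  have hi2 : (i < n)%N by rewrite ltn_neqAle hi' hi.
  by rewrite ?(negbTE hi') fnk // mulr0 subr0 hdel.
Qed.

End LinAlg.

Section Small.
Variables (R : realType) (X : normedModType R[i]).
Local Notation C := R[i].

Definition e4 (a b c d : X) : nat -> X :=
  fun i => match i with 0 => a | 1 => b | 2 => c | _ => d end.

Definition indep3 (a b c : X) := forall c0 c1 c2 : C,
  c0 *: a + c1 *: b + c2 *: c = 0 -> [/\ c0 = 0, c1 = 0 & c2 = 0].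
Definition indep4 (a b c d : X) := forall c0 c1 c2 c3 : C,
  c0 *: a + c1 *: b + c2 *: c + c3 *: d = 0 -> [/\ c0 = 0, c1 = 0, c2 = 0 & c3 = 0].

Lemma indep3P a b c : indep3 a b c -> indep 3 (e4 a b c 0).
Proof.
move=> h cf; rewrite !big_ord_recr big_ord0 /= add0r => /h [h0 h1 h2] i.
by case: i => [|[|[|]]].
Qed.

Lemma indep4P a b c d : indep4 a b c d -> indep 4 (e4 a b c d).
Proof.
move=> h cf; rewrite !big_ord_recr big_ord0 /= add0r => /h [h0 h1 h2 h3] i.
by case: i => [|[|[|[|]]]].
Qed.

Lemma biorth3 a b c : indep3 a b c -> exists f0 f1 f2 : X -> C,
  [/\ blin f0, blin f1 & blin f2] /\
  [/\ [/\ f0 a = 1, f0 b = 0 & f0 c = 0],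
      [/\ f1 a = 0, f1 b = 1 & f1 c = 0] &
      [/\ f2 a = 0, f2 b = 0 & f2 c = 1]].
Proof.
move=> /indep3P /biorth [f [hb hd]]; exists (f 0%N), (f 1%N), (f 2%N).
split; first by split; apply: hb.
have h i j := hd i j.
move: (h 0 0)%N (h 0 1)%N (h 0 2)%N (h 1 0)%N (h 1 1)%N (h 1 2)%N (h 2 0)%N (h 2 1)%N (h 2 2)%N.
rewrite /= ?mulr1n ?mulr0n.
by move=> -> // -> // -> // -> // -> // -> // -> // -> // -> //.
Qed.

Lemma biorth4 a b c d : indep4 a b c d -> exists f0 f1 f2 f3 : X -> C,
  [/\ blin f0, blin f1, blin f2 & blin f3] /\
  [/\ [/\ f0 a = 1, f0 b = 0, f0 c = 0 & f0 d = 0],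
      [/\ f1 a = 0, f1 b = 1, f1 c = 0 & f1 d = 0],
      [/\ f2 a = 0, f2 b = 0, f2 c = 1 & f2 d = 0] &
      [/\ f3 a = 0, f3 b = 0, f3 c = 0 & f3 d = 1]].
Proof.
move=> /indep4P /biorth [f [hb hd]]; exists (f 0%N), (f 1%N), (f 2%N), (f 3%N).
split; first by split; apply: hb.
have h i j := hd i j.
move: (h 0 0)%N (h 0 1)%N (h 0 2)%N (h 0 3)%N (h 1 0)%N (h 1 1)%N (h 1 2)%N (h 1 3)%N.
move: (h 2 0)%N (h 2 1)%N (h 2 2)%N (h 2 3)%N (h 3 0)%N (h 3 1)%N (h 3 2)%N (h 3 3)%N.
rewrite /= ?mulr1n ?mulr0n.
by do 16 (move=> -> //).
Qed.

Definition l2 (a b : X) (s t : C) := s *: a + t *: b.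
Lemma l2D a b s t s' t' : l2 a b s t + l2 a b s' t' = l2 a b (s + s') (t + t').
Proof. by rewrite /l2 addrACA !scalerDl. Qed.
Lemma l2Z a b k s t : k *: l2 a b s t = l2 a b (k * s) (k * t).
Proof. by rewrite /l2 scalerDr !scalerA. Qed.

Definition l3 (a b c : X) (s t u : C) := s *: a + t *: b + u *: c.
Lemma l3D a b c s t u s' t' u' :
  l3 a b c s t u + l3 a b c s' t' u' = l3 a b c (s + s') (t + t') (u + u').
Proof. by rewrite /l3 addrACA [X in X + _]addrACA !scalerDl. Qed.
Lemma l3Z a b c k s t u : k *: l3 a b c s t u = l3 a b c (k * s) (k * t) (k * u).
Proof. by rewrite /l3 !scalerDr !scalerA. Qed.
Lemma l3N a b c s t u : - l3 a b c s t u = l3 a b c (- s) (- t) (- u).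
Proof. by rewrite -scaleN1r l3Z !mulN1r. Qed.
Lemma l3_inj a b c s t u s' t' u' : indep3 a b c ->
  l3 a b c s t u = l3 a b c s' t' u' -> [/\ s = s', t = t' & u = u'].
Proof.
move=> h e; have : l3 a b c s t u + - l3 a b c s' t' u' = 0 by rewrite e subrr.
rewrite l3N l3D => /h [/eqP h1 /eqP h2 /eqP h3].
by split; apply/eqP; rewrite -subr_eq0.
Qed.

Definition l4 (a b c d : X) (s t u v : C) := s *: a + t *: b + u *: c + v *: d.
Lemma l4D a b c d s t u v s' t' u' v' :
  l4 a b c d s t u v + l4 a b c d s' t' u' v' = l4 a b c d (s + s') (t + t') (u + u') (v + v').
Proof.
rewrite /l4 addrACA !scalerDl; congr (_ + _).
rewrite addrACA; congr (_ + _); exact: addrACA.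
Qed.
Lemma l4Z a b c d k s t u v : k *: l4 a b c d s t u v = l4 a b c d (k * s) (k * t) (k * u) (k * v).
Proof. by rewrite /l4 !scalerDr !scalerA. Qed.
Lemma l4N a b c d s t u v : - l4 a b c d s t u v = l4 a b c d (- s) (- t) (- u) (- v).
Proof. by rewrite -scaleN1r l4Z !mulN1r. Qed.
Lemma l4_inj a b c d s t u v s' t' u' v' : indep4 a b c d ->
  l4 a b c d s t u v = l4 a b c d s' t' u' v' -> [/\ s = s', t = t', u = u' & v = v'].
Proof.
move=> h e; have : l4 a b c d s t u v + - l4 a b c d s' t' u' v' = 0 by rewrite e subrr.
rewrite l4N l4D => /h [/eqP h1 /eqP h2 /eqP h3 /eqP h4].
by split; apply/eqP; rewrite -subr_eq0.
Qed.

Lemma span2_dep (a b : X) (a1 b1 a2 b2 a3 b3 : C) :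
  ~ indep3 (l2 a b a1 b1) (l2 a b a2 b2) (l2 a b a3 b3).
Proof.
move=> hind.
have key : forall c1 c2 c3 : C, c1 * a1 + c2 * a2 + c3 * a3 = 0 ->
    c1 * b1 + c2 * b2 + c3 * b3 = 0 -> [/\ c1 = 0, c2 = 0 & c3 = 0].
  move=> c1 c2 c3 ea eb; apply: hind.
  by rewrite !l2Z !l2D ea eb /l2 !scale0r addr0.
have [x1 x2 x3] := key (a2 * b3 - a3 * b2) (a3 * b1 - a1 * b3) (a1 * b2 - a2 * b1)
  ltac:(ring) ltac:(ring).
have [ha2 na1 _] := key a2 (- a1) 0 ltac:(ring) ltac:(transitivity (- (a1 * b2 - a2 * b1)); [ring | by rewrite x3 oppr0]).
have [ha3 _ _] := key a3 0 (- a1) ltac:(ring) ltac:(transitivity (a3 * b1 - a1 * b3); [ring | exact: x2]).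
have ha1 : a1 = 0 by rewrite -[a1]opprK na1 oppr0.
have [hb2 nb1 _] := key b2 (- b1) 0 ltac:(rewrite ha1 ha2 ha3; ring) ltac:(ring).
have [hb3 _ _] := key b3 0 (- b1) ltac:(rewrite ha1 ha2 ha3; ring) ltac:(ring).
have hb1 : b1 = 0 by rewrite -[b1]opprK nb1 oppr0.
have [] := key 1 0 0 ltac:(rewrite ha1 ha2 ha3; ring) ltac:(rewrite hb1 hb2 hb3; ring).
by move/eqP; rewrite oner_eq0.
Qed.

End Small.

Section Ops.
Variables (R : realType) (X : normedModType R[i]).
Local Notation C := R[i].

Lemma jprod_lin (T S : X -> X) : linf T -> linf S -> linf (jprod T S).
Proof.
move=> hT hS a x y; rewrite /jprod hS hT hT hS scalerDr !addrA; congr (_ + _).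
by rewrite -!addrA; congr (_ + _); rewrite addrC.
Qed.

Lemma K_eigen (A : X -> X) (lam : C) (w : X) :
  linf A -> lam != 0 -> A w = lam *: w -> analytic_core A w.
Proof.
move=> hA l0 hw; exists `|lam^-1|, (fun n => lam^-1 ^+ n *: w).
split; first by rewrite normr_gt0 invr_eq0.
split; first by rewrite expr0 scale1r.
split.
- move=> n; rewrite linfZ // hw scalerA; congr (_ *: w).
  by rewrite exprSr -mulrA mulVf // mulr1.
- by move=> n; rewrite normrZ normrX.
Qed.

Lemma K_range (A : X -> X) w : analytic_core A w -> exists z, A z = w.
Proof. by move=> [d [xs [_ [h0 [h1 _]]]]]; exists (xs 1%N); rewrite h1 h0. Qed.

Definition goodT (G : X -> X) := exists T, bounded_op T /\ exists w1 w2 w3,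
  [/\ analytic_core (jprod T G) w1, analytic_core (jprod T G) w2,
      analytic_core (jprod T G) w3 & indep3 w1 w2 w3].

Lemma l3_1 (a b c : X) : l3 a b c 1 0 0 = a.
Proof. by rewrite /l3 scale1r !scale0r !addr0. Qed.
Lemma l3_2 (a b c : X) : l3 a b c 0 1 0 = b.
Proof. by rewrite /l3 scale1r !scale0r add0r addr0. Qed.
Lemma l3_3 (a b c : X) : l3 a b c 0 0 1 = c.
Proof. by rewrite /l3 scale1r !scale0r !add0r. Qed.
Lemma l3_lin (A : X -> X) (a b c : X) (s t u : C) : linf A ->
  A (l3 a b c s t u) = s *: A a + t *: A b + u *: A c.
Proof. by move=> hA; rewrite /l3 !(linfD hA) !(linfZ hA). Qed.

Lemma indep3_l3 (a b c : X) (p1 p2 p3 q1 q2 q3 r1 r2 r3 : C) : indep3 a b c ->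
  (forall c1 c2 c3 : C, c1 * p1 + c2 * q1 + c3 * r1 = 0 ->
      c1 * p2 + c2 * q2 + c3 * r2 = 0 -> c1 * p3 + c2 * q3 + c3 * r3 = 0 ->
      [/\ c1 = 0, c2 = 0 & c3 = 0]) ->
  indep3 (l3 a b c p1 p2 p3) (l3 a b c q1 q2 q3) (l3 a b c r1 r2 r3).
Proof.
move=> h hc c1 c2 c3; rewrite !l3Z !l3D => e.
have : l3 a b c (c1 * p1 + c2 * q1 + c3 * r1) (c1 * p2 + c2 * q2 + c3 * r2)
  (c1 * p3 + c2 * q3 + c3 * r3) = l3 a b c 0 0 0 by rewrite e /l3 !scale0r !addr0.
by move=> /(l3_inj h) [e1 e2 e3]; apply: hc.
Qed.

Lemma recipeC (G : X -> X) (w : X) : bounded_op G ->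
  indep3 w (G w) (G (G w)) -> goodT G.
Proof.
move=> hG hind; have lG := bounded_linf hG.
have [f0 [f1 [f2 [[b0 b1 b2] [[h00 h01 h02] [h10 h11 h12] [h20 h21 h22]]]]]] := biorth3 hind.
pose T := fun x => f1 x *: w + (2 * f2 x) *: G w.
have bT : bounded_op T.
  apply: bounded_add; first exact: bounded_r1.
  by apply: bounded_r1; apply: blin_scale.
exists T; split => //.
have lA := jprod_lin (bounded_linf bT) lG.
pose bet := f1 (G (G (G w))); pose gam := f2 (G (G (G w))).
have A1 : jprod T G w = w.
  by rewrite /jprod /T h11 h21 h10 h20 mulr0 !scale0r scale1r !addr0 (linf0 lG) addr0.
have A2 : jprod T G (G w) = 3%:R *: G w.
  rewrite /jprod /T h12 h22 h11 h21 mulr0 mulr1 !scale0r !add0r scale1r !addr0.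
  by rewrite -{2}(scale1r (G w)) -scalerDl natr1.
have A3 : jprod T G (G (G w)) = l3 w (G w) (G (G w)) bet (2 * gam) 2.
  by rewrite /jprod /T h12 h22 mulr1 scale0r add0r (linfZ lG) /l3.
pose v3 := l3 w (G w) (G (G w)) bet (- (2 * gam)) 1.
exists w, (G w), v3; split.
- by apply: (K_eigen lA (oner_neq0 _)); rewrite A1 scale1r.
- by apply: (K_eigen lA (lam := 3%:R)) => //; rewrite pnatr_eq0.
- apply: (K_eigen lA (lam := 2%:R)); first by rewrite pnatr_eq0.
  have A1' : jprod T G w = l3 w (G w) (G (G w)) 1 0 0 by rewrite A1 l3_1.
  have A2' : jprod T G (G w) = l3 w (G w) (G (G w)) 0 3%:R 0.
    by rewrite A2 /l3 !scale0r add0r addr0.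
  rewrite /v3 l3_lin // A1' A2' A3 !l3Z !l3D.
  congr l3; ring.
- suff : indep3 (l3 w (G w) (G (G w)) 1 0 0) (l3 w (G w) (G (G w)) 0 1 0) v3.
    by rewrite l3_1 l3_2.
  apply: indep3_l3 => // c1 c2 c3 e1 e2 e3.
  have z3 : c3 = 0 by rewrite -e3; ring.
  split => //.
    by rewrite -e1 z3; ring.
  by rewrite -e2 z3; ring.
Qed.

End Ops.

Section Recipes.
Variables (R : realType) (X : normedModType R[i]).
Local Notation C := R[i].

Definition indep2 (a b : X) := forall c0 c1 : C, c0 *: a + c1 *: b = 0 -> c0 = 0 /\ c1 = 0.

Lemma solve_lin (c : C) (v w : X) : c != 0 -> w + c *: v = 0 -> v = (- c^-1) *: w.
Proof.
move=> c0 e; have e' : c *: v = - w := esym (addr0_eq e).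
by rewrite scaleNr -scalerN -e' scalerA mulVf // scale1r.
Qed.

Lemma inf3 : infinite_dimensional X -> exists a b c : X, indep3 a b c.
Proof.
move=> hinf.
have [a ha] := hinf [::].
have a0 : a != 0 by have := ha (fun _ => 0); rewrite /= big_ord0.
have [b hb] := hinf [:: a].
have [c hc] := hinf [:: a; b].
exists a, b, c => c0 c1 c2 e.
have [c2z|c2n] := eqVneq c2 0; last first.
  have := hc (fun i => if nat_of_ord i == 0%N then - c2^-1 * c0 else - c2^-1 * c1).
  rewrite /= !big_ord_recr big_ord0 /= add0r.
  by rewrite (solve_lin c2n e) scalerDr !scalerA !mulNr eqxx.
rewrite c2z scale0r addr0 in e.
have [c1z|c1n] := eqVneq c1 0; last first.
  have := hb (fun i => - c1^-1 * c0).
  rewrite /= !big_ord_recr big_ord0 /= add0r.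
  by rewrite (solve_lin c1n e) scalerA mulNr eqxx.
rewrite c1z scale0r addr0 in e; move/eqP: e; rewrite scaler_eq0 (negbTE a0) orbF.
by move/eqP.
Qed.

Lemma recipeId (G T : X -> X) : bounded_op G -> bounded_op T ->
  infinite_dimensional X -> (forall x, jprod T G x = x) -> goodT G.
Proof.
move=> hG hT hinf hA; exists T; split => //.
have lA := jprod_lin (bounded_linf hT) (bounded_linf hG).
have [a [b [c h]]] := inf3 hinf; exists a, b, c; split => //;
  by apply: (K_eigen lA (oner_neq0 _)); rewrite hA scale1r.
Qed.

Lemma recipeQ1 (G : X -> X) (a b : C) : bounded_op G -> infinite_dimensional X ->
  (forall x, G (G x) = a *: G x + b *: x) -> b != 0 -> goodT G.
Proof.
move=> hG hinf hq b0; have lG := bounded_linf hG.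
pose k := (2 * b)^-1.
pose T := fun x => k *: (G x + (- a) *: x).
have bT : bounded_op T.
  apply: bounded_scale; apply: (bounded_add hG); apply: bounded_scale; exact: bounded_id.
apply: (recipeId hG bT hinf) => x.
rewrite /jprod /T (linfZ lG) (linfD lG) (linfZ lG) hq.
rewrite addrAC scaleNr subrr add0r -scalerDl scalerA.
have -> : (k + k) * b = 1 by rewrite /k; field.
by rewrite scale1r.
Qed.

Lemma recipeQ2a (G : X -> X) (a : C) : bounded_op G -> infinite_dimensional X ->
  (forall x, G x = a *: x) -> a != 0 -> goodT G.
Proof.
move=> hG hinf hq a0; have lG := bounded_linf hG.
pose T := fun x : X => (2 * a)^-1 *: x.
have bT : bounded_op T by apply: bounded_scale; exact: bounded_id.
apply: (recipeId hG bT hinf) => x.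
rewrite /jprod /T (linfZ lG) !hq !scalerA -scalerDl.
have -> : (2 * a)^-1 * a + (2 * a)^-1 * a = 1 by field.
by rewrite scale1r.
Qed.

End Recipes.

Section Recipes2.
Variables (R : realType) (X : normedModType R[i]).
Local Notation C := R[i].

Lemma recipeQ2b (G : X -> X) (a : C) (z x1 x2 : X) : bounded_op G ->
  (forall x, G (G x) = a *: G x) -> a != 0 -> G z != a *: z ->
  indep2 (G x1) (G x2) -> goodT G.
Proof.
move=> hG hq a0 hz hu; have lG := bounded_linf hG.
pose k := z - a^-1 *: G z.
have Gk : G k = 0 by rewrite /k (linfB lG) (linfZ lG) hq scalerA mulVf // scale1r subrr.
have k0 : k != 0.
  apply: contra hz; rewrite /k subr_eq0 => /eqP ez; apply/eqP.
  by rewrite {2}ez scalerA mulfV // scale1r.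
set u1 := G x1; set u2 := G x2.
have Gu1 : G u1 = a *: u1 by rewrite /u1 hq.
have Gu2 : G u2 = a *: u2 by rewrite /u2 hq.
have hind : indep3 k u1 u2.
  move=> c0 c1 c2 e.
  have := congr1 G e; rewrite (linf0 lG) !(linfD lG) !(linfZ lG) Gk Gu1 Gu2.
  rewrite scaler0 add0r !scalerA => /hu [/eqP e1 /eqP e2].
  rewrite mulf_eq0 (negbTE a0) orbF in e1; rewrite mulf_eq0 (negbTE a0) orbF in e2.
  move/eqP: e1 => e1; move/eqP: e2 => e2.
  rewrite e1 e2 !scale0r !addr0 in e; move/eqP: e; rewrite scaler_eq0 (negbTE k0) orbF.
  by move/eqP.
have [f0 [f1 [f2 [[b0 b1 b2] [[h00 h01 h02] [h10 h11 h12] [h20 h21 h22]]]]]] := biorth3 hind.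
pose T := fun x => f0 x *: u1 + f1 x *: k + ((2 * a)^-1 * f2 x) *: u2.
have bT : bounded_op T.
  apply: bounded_add; first by apply: bounded_add; exact: bounded_r1.
  by apply: bounded_r1; apply: blin_scale.
have lT := bounded_linf bT.
have Tk : T k = u1 by rewrite /T h00 h10 h20 mulr0 !scale0r scale1r !addr0.
have Tu1 : T u1 = k by rewrite /T h01 h11 h21 mulr0 !scale0r scale1r add0r addr0.
have Tu2 : T u2 = (2 * a)^-1 *: u2 by rewrite /T h02 h12 h22 mulr1 !scale0r !add0r.
exists T; split => //.
have lA := jprod_lin lT lG.
have Ak : jprod T G k = l3 k u1 u2 0 a 0.
  by rewrite /jprod Gk (linf0 lT) add0r Tk Gu1 /l3 !scale0r add0r addr0.
have Au1 : jprod T G u1 = l3 k u1 u2 a 0 0.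
  by rewrite /jprod Gu1 (linfZ lT) Tu1 Gk addr0 /l3 !scale0r !addr0.
have Au2 : jprod T G u2 = l3 k u1 u2 0 0 1.
  rewrite /jprod Gu2 (linfZ lT) Tu2 (linfZ lG) Gu2 !scalerA -scalerDl.
  by rewrite /l3 !scale0r !add0r; congr (_ *: _); field.
have Al s t u : jprod T G (l3 k u1 u2 s t u) = l3 k u1 u2 (a * t) (a * s) u.
  rewrite l3_lin // Ak Au1 Au2 !l3Z !l3D; congr l3; ring.
exists (l3 k u1 u2 1 1 0), (l3 k u1 u2 1 (-1) 0), (l3 k u1 u2 0 0 1); split.
- apply: (K_eigen lA a0); rewrite Al l3Z; congr l3; ring.
- apply: (K_eigen lA (lam := - a)); first by rewrite oppr_eq0.
  rewrite Al l3Z; congr l3; ring.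
- apply: (K_eigen lA (oner_neq0 _)); rewrite Al l3Z; congr l3; ring.
- apply: indep3_l3 => // c1 c2 c3 e1 e2 e3.
  have h3 : c3 = 0 by rewrite -e3; ring.
  have s1 : c1 + c2 = 0 by rewrite -e1; ring.
  have s2 : c1 - c2 = 0 by rewrite -e2; ring.
  have t1 : 2 * c1 = 0.
    by transitivity ((c1 + c2) + (c1 - c2)); [ring | rewrite s1 s2 addr0].
  have c10 : c1 = 0 by move/eqP: t1; rewrite mulf_eq0 pnatr_eq0 /= => /eqP.
  have c20 : c2 = 0 by move: s1; rewrite c10 add0r.
  by split.
Qed.

Lemma recipeQ3 (G : X -> X) (x1 x2 : X) : bounded_op G ->
  (forall x, G (G x) = 0) -> indep2 (G x1) (G x2) -> goodT G.
Proof.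
move=> hG hq hu; have lG := bounded_linf hG.
set u1 := G x1; set u2 := G x2.
have Gu1 : G u1 = 0 by rewrite /u1 hq.
have Gu2 : G u2 = 0 by rewrite /u2 hq.
have hind : indep4 x1 x2 u1 u2.
  move=> c0 c1 c2 c3 e.
  have := congr1 G e; rewrite (linf0 lG) !(linfD lG) !(linfZ lG) Gu1 Gu2 !scaler0 !addr0.
  move=> /hu [e0 e1]; rewrite e0 e1 !scale0r !add0r in e.
  by have [e2 e3] := hu _ _ e.
have [f0 [f1 [f2 [f3 [[b0 b1 b2 b3] [[h00 h01 h02 h03] [h10 h11 h12 h13] [h20 h21 h22 h23] [h30 h31 h32 h33]]]]]]] := biorth4 hind.
pose T := fun x => f2 x *: x1 + f3 x *: x2.
have bT : bounded_op T by apply: bounded_add; exact: bounded_r1.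
have lT := bounded_linf bT.
exists T; split => //.
have lA := jprod_lin lT lG.
exists x1, x2, u1; split.
- apply: (K_eigen lA (oner_neq0 _)).
  by rewrite /jprod /T h22 h32 h20 h30 !scale0r scale1r !addr0 (linf0 lG) addr0.
- apply: (K_eigen lA (oner_neq0 _)).
  by rewrite /jprod /T h23 h33 h21 h31 !scale0r scale1r !add0r (linf0 lG) addr0.
- apply: (K_eigen lA (oner_neq0 _)).
  rewrite /jprod Gu1 (linf0 lT) add0r /T h22 h32 !scale0r scale1r addr0.
  by rewrite scale1r.
- move=> c0 c1 c2 e.
  have : c0 *: x1 + c1 *: x2 + c2 *: u1 + 0 *: u2 = 0 by rewrite scale0r addr0.
  by move=> /hind [].
Qed.

End Recipes2.

Section Kap.
Variables (R : realType) (X : normedModType R[i]).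
Local Notation C := R[i].

Lemma not_indep3 (a b c : X) : ~ indep3 a b c ->
  exists c0 c1 c2 : C, c0 *: a + c1 *: b + c2 *: c = 0 /\ ~ [/\ c0 = 0, c1 = 0 & c2 = 0].
Proof.
move=> hn; apply: contrapT => hne; apply: hn => c0 c1 c2 e.
apply: contrapT => hn'; apply: hne; by exists c0, c1, c2.
Qed.

Lemma not_indep2 (a b : X) : ~ indep2 a b ->
  exists c0 c1 : C, c0 *: a + c1 *: b = 0 /\ ~ (c0 = 0 /\ c1 = 0).
Proof.
move=> hn; apply: contrapT => hne; apply: hn => c0 c1 e.
apply: contrapT => hn'; apply: hne; by exists c0, c1.
Qed.

Lemma not_indep4 (a b c d : X) : ~ indep4 a b c d ->
  exists c0 c1 c2 c3 : C, c0 *: a + c1 *: b + c2 *: c + c3 *: d = 0 /\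
    ~ [/\ c0 = 0, c1 = 0, c2 = 0 & c3 = 0].
Proof.
move=> hn; apply: contrapT => hne; apply: hn => c0 c1 c2 c3 e.
apply: contrapT => hn'; apply: hne; by exists c0, c1, c2, c3.
Qed.

Lemma nc_rel (G : X -> X) (w : X) : linf G -> ~ indep3 w (G w) (G (G w)) ->
  exists al be : C, G (G w) = al *: G w + be *: w.
Proof.
move=> lG /not_indep3 [c0 [c1 [c2 [e nz]]]].
have [c2z|c2n] := eqVneq c2 0; last first.
  have hw := solve_lin c2n e.
  exists (- c2^-1 * c1), (- c2^-1 * c0).
  by rewrite hw scalerDr !scalerA addrC.
rewrite c2z scale0r addr0 in e.
have [c1z|c1n] := eqVneq c1 0; last first.
  have hw := solve_lin c1n e.
  exists (- c1^-1 * c0), 0; rewrite scale0r addr0.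
  by rewrite {1}hw (linfZ lG) (linfZ lG) scalerA.
rewrite c1z scale0r addr0 in e.
have c0n : c0 != 0 by apply/eqP => c0z; apply: nz; split.
move/eqP: e; rewrite scaler_eq0 (negbTE c0n) /= => /eqP ->.
by exists 0, 0; rewrite !(linf0 lG) !scaler0 addr0.
Qed.

Lemma loc_scalar (G : X -> X) : linf G -> (forall x, ~ indep2 x (G x)) ->
  exists lam : C, forall x, G x = lam *: x.
Proof.
move=> lG hls.
have ls x : exists mu : C, G x = mu *: x.
  have [c0 [c1 [e nz]]] := not_indep2 (hls x).
  have [c1z|c1n] := eqVneq c1 0; last first.
    by exists (- c1^-1 * c0); rewrite -scalerA; exact: solve_lin c1n e.
  rewrite c1z scale0r addr0 in e.
  have c0n : c0 != 0 by apply/eqP => c0z; apply: nz; split.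
  move/eqP: e; rewrite scaler_eq0 (negbTE c0n) /= => /eqP ->.
  by exists 0; rewrite (linf0 lG) scale0r.
have [[x0 x00]|all0] := pselect (exists x0 : X, x0 != 0); last first.
  exists 0 => x; have -> : x = 0.
    by apply/eqP; apply: contrapT => hx; apply: all0; exists x; apply/negP.
  by rewrite (linf0 lG) scaler0.
have [lam hl] := ls x0; exists lam => y.
have [hi|hni] := pselect (indep2 x0 y).
  have [nu hnu] := ls (x0 + y); have [mu hmu] := ls y.
  rewrite (linfD lG) hl hmu scalerDr in hnu.
  have : (lam - nu) *: x0 + (mu - nu) *: y = 0.
    by rewrite !scalerBl addrACA hnu -opprD subrr.
  move=> /hi [/eqP e1 /eqP e2]; rewrite subr_eq0 in e1; rewrite subr_eq0 in e2.
  by rewrite hmu (eqP e2) -(eqP e1).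
have [c0 [c1 [e nz]]] := not_indep2 hni.
have [c1z|c1n] := eqVneq c1 0.
  rewrite c1z scale0r addr0 in e; exfalso; apply: nz; split => //.
  by move/eqP: e; rewrite scaler_eq0 (negbTE x00) orbF => /eqP.
by rewrite (solve_lin c1n e) !(linfZ lG) hl !scalerA; congr (_ *: _); ring.
Qed.

End Kap.

Section Kap2.
Variables (R : realType) (X : normedModType R[i]).
Local Notation C := R[i].

Lemma kap (G : X -> X) : linf G -> (forall w, ~ indep3 w (G w) (G (G w))) ->
  exists a b : C, forall x, G (G x) = a *: G x + b *: x.
Proof.
move=> lG hnc.
have NC w := nc_rel lG (hnc w).
have [[x0 hx0]|hls] := pselect (exists x0, indep2 x0 (G x0)); last first.
  have [lam hl] := loc_scalar lG (fun x hx => hls (ex_intro _ x hx)).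
  by exists lam, 0 => x; rewrite scale0r addr0 hl.
have [a [b hab]] := NC x0.
exists a, b => y.
have GL2 p q : G (l2 x0 (G x0) p q) = l2 x0 (G x0) (q * b) (p + q * a).
  rewrite /l2 (linfD lG) !(linfZ lG) hab.
  by rewrite scalerDr !scalerA scalerDl addrA addrC.
have [h3|hn3] := pselect (indep3 x0 (G x0) y); last first.
  have [c0 [c1 [c2 [e nz]]]] := not_indep3 hn3.
  have [c2z|c2n] := eqVneq c2 0.
    rewrite c2z scale0r addr0 in e.
    by have [h0 h1] := hx0 _ _ e; exfalso; apply: nz; split.
  rewrite (solve_lin c2n e).
  change (c0 *: x0 + c1 *: G x0) with (l2 x0 (G x0) c0 c1).
  by rewrite l2Z !GL2 !l2Z l2D; congr l2; ring.
have [al' [be' hy]] := NC y.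
have [h4|hn4] := pselect (indep4 x0 (G x0) y (G y)).
  have [al [be hz]] := NC (x0 + y).
  rewrite !(linfD lG) hab hy in hz.
  have e1 : a *: G x0 + b *: x0 + (al' *: G y + be' *: y) =
            l4 x0 (G x0) y (G y) b a be' al'.
    by rewrite /l4 [a *: G x0 + _]addrC [al' *: G y + _]addrC !addrA.
  have e2 : al *: (G x0 + G y) + be *: (x0 + y) = l4 x0 (G x0) y (G y) be al be al.
    rewrite !scalerDr addrACA [al *: G x0 + _]addrC [al *: G y + _]addrC.
    by rewrite /l4 !addrA.
  rewrite e1 e2 in hz.
  have [eb ea ebe eal] := l4_inj h4 hz.
  by rewrite hy eal ebe ea eb.
have [c0 [c1 [c2 [c3 [e nz]]]]] := not_indep4 hn4.
have [c3z|c3n] := eqVneq c3 0.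
  rewrite c3z scale0r addr0 in e.
  by have [e0 e1 e2] := h3 _ _ _ e; exfalso; apply: nz; split.
set v1 := - c3^-1 * c0; set v2 := - c3^-1 * c1; set mu := - c3^-1 * c2.
have Gy : G y = l3 x0 (G x0) y v1 v2 mu.
  rewrite (solve_lin c3n e).
  by change (c0 *: x0 + c1 *: G x0 + c2 *: y) with (l3 x0 (G x0) y c0 c1 c2); rewrite l3Z.
have GL p q r : G (l3 x0 (G x0) y p q r) =
    l3 x0 (G x0) y (q * b + r * v1) (p + q * a + r * v2) (r * mu).
  rewrite l3_lin // hab Gy.
  have eab : a *: G x0 + b *: x0 = l3 x0 (G x0) y b a 0.
    by rewrite /l3 scale0r addr0 addrC.
  rewrite eab.
  have e1 : G x0 = l3 x0 (G x0) y 0 1 0 by rewrite l3_2.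
  rewrite {1}e1 !l3Z !l3D; congr l3; ring.
pose r1 := v2 * b + mu * v1 - a * v1.
pose r2 := v1 + mu * v2.
pose P := mu * mu - a * mu - b.
have Qt : forall t : C, t != 0 ->
    t * r1 * (1 + t * v2) - t * r2 * (t * v1 - mu) - P * (1 + t * v2) = 0.
  move=> t t0; have [al [be hz]] := NC (l3 x0 (G x0) y 1 0 t).
  rewrite !GL !l3Z l3D in hz.
  have [E1 E2 E3] := l3_inj h3 hz.
  move/eqP: E1; rewrite -subr_eq0 => /eqP E1.
  move/eqP: E2; rewrite -subr_eq0 => /eqP E2.
  move/eqP: E3; rewrite -subr_eq0 => /eqP E3.
  set L1 := (X in X = 0) in E1.
  set L2 := (X in X = 0) in E2.
  set L3 := (X in X = 0) in E3.
  have D3 : mu * mu - al * mu - be = 0.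
    have : t * (mu * mu - al * mu - be) = 0 by rewrite -E3 /L3; ring.
    by move/eqP; rewrite mulf_eq0 (negbTE t0) /= => /eqP.
  transitivity ((1 + t * v2) * L1 - (t * v1 - mu) * L2 - (1 + t * v2) * (mu * mu - al * mu - be)).
    by rewrite /L1 /L2 /r1 /r2 /P; ring.
  by rewrite E1 E2 D3; ring.
have Q1 := Qt 1 (oner_neq0 _).
have Q2 := Qt 2%:R ltac:(by rewrite pnatr_eq0).
have Q3 := Qt 3%:R ltac:(by rewrite pnatr_eq0).
pose k0 := - P; pose k1 := r1 + r2 * mu - P * v2; pose k2 := r1 * v2 - r2 * v1.
have K2 : 2%:R * k2 = 0.
  transitivity ((3%:R * r1 * (1 + 3%:R * v2) - 3%:R * r2 * (3%:R * v1 - mu) - P * (1 + 3%:R * v2))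
    - 2%:R * (2%:R * r1 * (1 + 2%:R * v2) - 2%:R * r2 * (2%:R * v1 - mu) - P * (1 + 2%:R * v2))
    + (1 * r1 * (1 + 1 * v2) - 1 * r2 * (1 * v1 - mu) - P * (1 + 1 * v2))).
    by rewrite /k2; ring.
  by rewrite Q1 Q2 Q3; ring.
have k20 : k2 = 0 by move/eqP: K2; rewrite mulf_eq0 pnatr_eq0 /= => /eqP.
have k10 : k1 = 0.
  transitivity ((2%:R * r1 * (1 + 2%:R * v2) - 2%:R * r2 * (2%:R * v1 - mu) - P * (1 + 2%:R * v2))
    - (1 * r1 * (1 + 1 * v2) - 1 * r2 * (1 * v1 - mu) - P * (1 + 1 * v2)) - 3%:R * k2).
    by rewrite /k1 /k2; ring.
  by rewrite Q1 Q2 k20; ring.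
have P0 : P = 0.
  transitivity (- ((1 * r1 * (1 + 1 * v2) - 1 * r2 * (1 * v1 - mu) - P * (1 + 1 * v2)) - k1 - k2)).
    by rewrite /k1 /k2; ring.
  by rewrite Q1 k10 k20; ring.
have r1e : r1 = - (r2 * mu).
  by apply/eqP; rewrite -subr_eq0; apply/eqP; rewrite -k10 /k1 P0 mul0r subr0 opprK.
have r20 : r2 = 0.
  have : r2 * r2 = 0.
    transitivity (- k2); last by rewrite k20 oppr0.
    by rewrite /k2 r1e /r2; ring.
  by move/eqP; rewrite mulf_eq0 orbb => /eqP.
have r10 : r1 = 0 by rewrite r1e r20 mul0r oppr0.
suff : G (G y) = a *: G y + b *: l3 x0 (G x0) y 0 0 1 by rewrite l3_3.
rewrite Gy GL !l3Z l3D; congr l3.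
- apply/eqP; rewrite -subr_eq0; apply/eqP; transitivity r1; last exact: r10.
  by rewrite /r1; ring.
- apply/eqP; rewrite -subr_eq0; apply/eqP; transitivity r2; last exact: r20.
  by rewrite /r2; ring.
- apply/eqP; rewrite -subr_eq0; apply/eqP; transitivity P; last exact: P0.
  by rewrite /P; ring.
Qed.

End Kap2.

Section Final.
Variables (R : realType) (X : normedModType R[i]).
Local Notation C := R[i].

Lemma hard (G : X -> X) (x1 x2 : X) : bounded_op G -> infinite_dimensional X ->
  indep2 (G x1) (G x2) -> goodT G.
Proof.
move=> hG hinf hu; have lG := bounded_linf hG.
have [[w hw]|hnc] := pselect (exists w, indep3 w (G w) (G (G w))).
  exact: recipeC hG hw.
have [a [b hab]] := kap lG (fun w hw => hnc (ex_intro _ w hw)).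
have [b0|bn] := eqVneq b 0; last exact: recipeQ1 hG hinf hab bn.
have hq : forall x, G (G x) = a *: G x by move=> x; rewrite hab b0 scale0r addr0.
have [a0|an] := eqVneq a 0.
  by apply: (recipeQ3 hG _ hu) => x; rewrite hq a0 scale0r.
have [[z hz]|hall] := pselect (exists z, G z != a *: z).
  exact: recipeQ2b hG hq an hz hu.
apply: (recipeQ2a hG hinf _ an) => x; apply/eqP; apply: contrapT => h.
by apply: hall; exists x; apply/negP.
Qed.

Definition Prop1 (F : X -> X) : Prop :=
  (exists T, bounded_op T /\ exists x, x != 0 /\ analytic_core (jprod T F) x) /\
  (forall T, bounded_op T -> forall w1 w2 w3, analytic_core (jprod T F) w1 ->
     analytic_core (jprod T F) w2 -> analytic_core (jprod T F) w3 -> ~ indep3 w1 w2 w3).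

Lemma rank_one_char (F : X -> X) : bounded_op F -> infinite_dimensional X ->
  (rank_one F <-> Prop1 F).
Proof.
move=> hF hinf; have lF := bounded_linf hF; split.
- move=> [[x hx] [y hy]]; split.
  + have [d hd] : exists d : C, F (F x) = d *: F x.
      have [c1 h1] := hy (F x); have [c2 h2] := hy x.
      have c2n : c2 != 0 by apply: contra hx; rewrite h2 => /eqP ->; rewrite scale0r.
      exists (c1 * c2^-1); rewrite h1 h2 scalerA -mulrA mulVf // mulr1.
      by [].
    have [d0|dn] := eqVneq d 0.
      have [g [gb gy]] := hb_exists hx.
      exists (fun z => g z *: x); split; first exact: bounded_r1.
      exists (F x); split => //.
      apply: (K_eigen _ (oner_neq0 _)).
        by apply: jprod_lin; [apply: bounded_linf; exact: bounded_r1 | exact: lF].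
      by rewrite /jprod hd d0 scale0r (linf0 (blin_linf gb)) scale0r add0r gy !scale1r.
    exists (fun z => z); split; first exact: bounded_id.
    exists (F x); split => //.
    apply: (K_eigen (lam := 2%:R * d)).
    + by apply: jprod_lin; [apply: bounded_linf; exact: bounded_id | exact: lF].
    + by rewrite mulf_neq0 // pnatr_eq0.
    + by rewrite /jprod hd -scalerA scaler_nat mulr2n.
  + move=> T hT w1 w2 w3 k1 k2 k3.
    have lT := bounded_linf hT.
    have hw (w : X) : analytic_core (jprod T F) w -> exists a b : C, w = l2 y (T y) a b.
      move=> /K_range [z <-]; have [c hc] := hy z; have [c' hc'] := hy (T z).
      exists c', c; by rewrite /jprod hc (linfZ lT) hc' /l2 addrC.
    have [a1 [b1 ->]] := hw _ k1; have [a2 [b2 ->]] := hw _ k2; have [a3 [b3 ->]] := hw _ k3.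
    exact: span2_dep.
- move=> [[T [hT [x [x0 kx]]]] hdep]; apply: contrapT => nr1.
  have [[x1 hx1]|hall] := pselect (exists x1, F x1 != 0); last first.
    have [z hz] := K_range kx; apply: (negP x0); apply/eqP; rewrite -hz /jprod.
    have F0 u : F u = 0 by apply/eqP; apply: contrapT => h; apply: hall; exists u; exact/negP.
    by rewrite !F0 (linf0 (bounded_linf hT)) addr0.
  have [x2 hx2] : exists x2, forall c : C, F x2 != c *: F x1.
    apply: contrapT => hn; apply: nr1; split; first by exists x1.
    exists (F x1) => x'; apply: contrapT => hc; apply: hn; exists x' => c; apply/eqP => e.
    by apply: hc; exists c.
  have hu : indep2 (F x1) (F x2).
    move=> c0 c1 e; have [c1z|c1n] := eqVneq c1 0.
      rewrite c1z scale0r addr0 in e; split => //.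
      by move/eqP: e; rewrite scaler_eq0 (negbTE hx1) orbF => /eqP.
    by have := hx2 (- c1^-1 * c0); rewrite (solve_lin c1n e) scalerA eqxx.
  have [T' [hT' [w1 [w2 [w3 [k1 k2 k3 hi]]]]]] := hard hF hinf hu.
  exact: hdep hT' _ _ _ k1 k2 k3 hi.
Qed.

End Final.

Local Close Scope classical_set_scope.
Unset Implicit Arguments.

Theorem mainTheorem6 (R : realType) (X : completeNormedModType R[i])
  (phi : (X -> X) -> (X -> X)) :
  infinite_dimensional X ->
  (forall T : X -> X, bounded_op T -> bounded_op (phi T)) ->
  (forall S : X -> X, bounded_op S -> exists T, bounded_op T /\ phi T = S) ->
  (forall T S : X -> X, bounded_op T -> bounded_op S ->
     analytic_core (jprod (phi T) (phi S)) = analytic_core (jprod T S)) ->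
  forall F : X -> X, bounded_op F -> (rank_one (phi F) <-> rank_one F).
Proof.
move=> hinf hb hsurj hK F hF.
rewrite (rank_one_char (hb _ hF) hinf) (rank_one_char hF hinf).
split.
- move=> [[S [hS [x [x0 kx]]]] hdep]; split.
    have [T [hT eT]] := hsurj S hS; exists T; split => //; exists x; split => //.
    by rewrite -(hK T F hT hF) eT.
  move=> T hT w1 w2 w3; rewrite -(hK T F hT hF) => k1 k2 k3.
  exact: hdep (hb T hT) _ _ _ k1 k2 k3.
- move=> [[T [hT [x [x0 kx]]]] hdep]; split.
    exists (phi T); split; first exact: hb.
    by exists x; split => //; rewrite (hK T F hT hF).
  move=> S hS w1 w2 w3; have [T1 [hT1 <-]] := hsurj S hS.
  rewrite (hK T1 F hT1 hF) => k1 k2 k3.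
  exact: hdep hT1 _ _ _ k1 k2 k3.
Qed.
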